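(* Let $n\ge1$ and $P=\Phi^+(A_n)=\{(i,j)\colon 1\le i,j\le n,\ i+j\ge n+1\}$. Fix $k\in\{n-1,n-3,\dots,-(n-3),-(n-1)\}$. Then \[2\sum_{\substack{(i,j)\in P\\ j-i=k}}\mathbb{1}_{(i,j)}-\sum_{\substack{(i,j)\in P\\ j-i=k-1}}\mathbb{1}_{(i,j)}-\sum_{\substack{(i,j)\in P\\ j-i=k+1}}\mathbb{1}_{(i,j)}\equiv 1.\]
   Context: $P$ is ordered by $(i,j)\le(i',j')$ iff $i\le i'$ and $j\le j'$. $\mathcal{J}(P)$ is the set of order ideals of $P$. For $x\in P$, $I\in\mathcal{J}(P)$: $\mathbb{1}_x(I)=1$ if $x\in I$, else $0$; $T_x^+(I)=1$ if $x$ is a minimal element of $P\setminus I$, else $0$; $T_x^-(I)=1$ if $x$ is a maximal element of $I$, else $0$; $T_x=T_x^+-T_x^-$. For $f,g\colon\mathcal{J}(P)\to\mathbb{R}$, $f\equiv g$ means $f-g=\sum_{x\in P}c_xT_x$ for some real constants $c_x$; a real number denotes the corresponding constant function. *)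

(* Defs.v *)
From HB Require Import structures.
From mathcomp Require Import all_boot all_order all_algebra.
From mathcomp Require Import reals.
Set Implicit Arguments. Unset Strict Implicit. Unset Printing Implicit Defensive.
Import Order.TTheory GRing.Theory Num.Theory.
Local Open Scope ring_scope.

(* Points (i,j) with 1 <= i,j <= n are encoded 0-indexed as (i-1, j-1) : 'I_n * 'I_n. *)
Definition pt (n : nat) := ('I_n * 'I_n)%type.

(* Membership in P = Phi^+(A_n): i + j >= n + 1, i.e. (i-1)+(j-1) >= n-1. *)
Definition inP (n : nat) (x : pt n) : bool := (n.-1 <= x.1 + x.2)%N.

Definition ple (n : nat) (x y : pt n) : bool := (x.1 <= y.1)%N && (x.2 <= y.2)%N.

Definition is_ideal (n : nat) (I : {set pt n}) : Prop :=
  (forall x, x \in I -> inP x) /\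
  (forall x y, x \in I -> inP y -> ple y x -> y \in I).

Section Toggles.
Variable (R : realType) (n : nat).

Definition ind (x : pt n) (I : {set pt n}) : R := (x \in I)%:R.

Definition Tplus (x : pt n) (I : {set pt n}) : R :=
  [&& inP x, x \notin I &
      [forall y : pt n, (inP y && (y \notin I) && ple y x) ==> (y == x)]]%:R.

Definition Tminus (x : pt n) (I : {set pt n}) : R :=
  [&& x \in I & [forall y : pt n, ((y \in I) && ple x y) ==> (y == x)]]%:R.

Definition Tog (x : pt n) (I : {set pt n}) : R := Tplus x I - Tminus x I.

Definition toggle_equiv (f g : {set pt n} -> R) : Prop :=
  exists c : pt n -> R, forall I : {set pt n}, is_ideal I ->
    f I - g I = \sum_(x : pt n | inP x) c x * Tog x I.

Definition diag_sum (d : int) (I : {set pt n}) : R :=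
  \sum_(x : pt n | inP x && ((x.2 : int) - (x.1 : int) == d)) ind x I.

End Toggles.

(* Main.v *)
Require Import Defs.
From HB Require Import structures.
From mathcomp Require Import all_boot all_order all_algebra.
From mathcomp Require Import reals.
From mathcomp Require Import zify ring lra.
Import Order.TTheory GRing.Theory Num.Theory.
Local Open Scope ring_scope.

Section Aux.
Variable (R : realType) (n : nat).

Definition ext (F : pt n -> R) (a b : nat) : R :=
  \sum_(x : pt n) (((x.1 : nat) == a) && ((x.2 : nat) == b))%:R * F x.

Lemma ext_pt F (x : pt n) a b : (x.1 : nat) = a -> (x.2 : nat) = b -> ext F a b = F x.
Proof.
move=> h1 h2; rewrite /ext (bigD1 x) //= h1 h2 !eqxx /= mul1r big1 ?addr0 //.
move=> [y1 y2] /= hne.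
case E: ((y1 : nat) == a); case E2: ((y2 : nat) == b) => /=; rewrite ?mul0r //.
exfalso; move: hne; case: x h1 h2 => x1 x2 /= h1 h2.
rewrite xpair_eqE; move/eqP: E; move/eqP: E2 => E2 E.
have -> : y1 = x1 by apply: val_inj; rewrite /= E h1.
have -> : y2 = x2 by apply: val_inj; rewrite /= E2 h2.
by rewrite !eqxx.
Qed.

Lemma ext_out F a b : (n <= a)%N || (n <= b)%N -> ext F a b = 0.
Proof.
move=> h; rewrite /ext big1 // => [[y1 y2]] _ /=.
case E: ((y1 : nat) == a); case E2: ((y2 : nat) == b) => /=; rewrite ?mul0r //.
move/eqP: E => E; move/eqP: E2 => E2.
have := ltn_ord y1; have := ltn_ord y2; lia.
Qed.

Lemma diag_reindex (F : pt n -> R) (d : int) (i0 j0 : nat) :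
  (forall i j : nat, (i < n)%N -> (j < n)%N ->
     ((n.-1 <= i + j)%N && ((j : int) - (i : int) == d)) =
     ((i0 <= i)%N && (j + i0 == i + j0)%N)) ->
  \sum_(x : pt n | inP x && ((x.2 : int) - (x.1 : int) == d)) F x =
  \sum_(t < n) ext F (i0 + t) (j0 + t).
Proof.
move=> H.
rewrite /ext exchange_big /= big_mkcond /=.
apply: eq_bigr => x _.
rewrite -mulr_suml.
have -> : inP x && ((x.2 : int) - (x.1 : int) == d) =
          (i0 <= x.1)%N && (x.2 + i0 == x.1 + j0)%N.
  by rewrite /inP H.
case: ifP => hc.
- move/andP: hc => [h1 /eqP h2].
  have ht : (x.1 - i0 < n)%N by have := ltn_ord x.1; lia.
  rewrite (bigD1 (Ordinal ht)) //= big1.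
    have -> : ((x.1 : nat) == i0 + (x.1 - i0))%N && ((x.2 : nat) == j0 + (x.1 - i0))%N.
      by apply/andP; split; apply/eqP; lia.
    by rewrite addr0 mul1r.
  move=> t ht2.
  case E: ((x.1 : nat) == i0 + t) => //=.
  exfalso; move/eqP: ht2; apply; apply: val_inj => /=; move/eqP: E; lia.
- rewrite big1 ?mul0r // => t _.
  case E: ((x.1 : nat) == i0 + t); case E2: ((x.2 : nat) == j0 + t) => //=.
  move/eqP: E => E; move/eqP: E2 => E2.
  move: hc; have -> : (i0 <= x.1)%N by lia.
  have -> : (x.2 + i0 == x.1 + j0)%N by apply/eqP; lia.
  by [].
Qed.

Lemma inP_mono (x y : pt n) : inP x -> ple x y -> inP y.
Proof. rewrite /inP /ple => h /andP[h1 h2]; lia. Qed.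

Lemma Tminus_gen (I : {set pt n}) (hI : is_ideal I) (x : pt n) (C : seq (pt n)) :
  (forall c, c \in C -> ple x c /\ c != x) ->
  (forall y, ple x y -> y != x -> exists2 c, c \in C & ple c y) ->
  Tminus R x I = ((x \in I) && all (fun c => c \notin I) C)%:R.
Proof.
move=> HC Hy; rewrite /Tminus; congr ((nat_of_bool _)%:R).
case hx: (x \in I) => //=.
apply/idP/idP => [/forallP Hf | /allP Ha].
- apply/allP => c hc; apply/negP => hcI.
  have [h1 h2] := HC c hc.
  by move: (Hf c); rewrite hcI h1 /= (negbTE h2).
- apply/forallP => y; apply/implyP => /andP[hyI hxy].
  apply/negPn/negP => hne.
  have [c hc hcy] := Hy y hxy hne.
  have hcI : c \in I.
    apply: hI.2 hyI _ hcy.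
    have [h1 _] := HC c hc.
    exact: inP_mono (hI.1 x hx) h1.
  by move: (Ha c hc); rewrite hcI.
Qed.

Lemma Tplus_gen (I : {set pt n}) (hI : is_ideal I) (x : pt n) (C : seq (pt n)) :
  inP x ->
  (forall c, c \in C -> [/\ ple c x, c != x & inP c]) ->
  (forall y, inP y -> ple y x -> y != x -> exists2 c, c \in C & ple y c) ->
  Tplus R x I = ((x \notin I) && all (fun c => c \in I) C)%:R.
Proof.
move=> hx HC Hy; rewrite /Tplus hx /=; congr ((nat_of_bool _)%:R).
case hxI: (x \in I) => //=.
apply/idP/idP => [/forallP Hf | /allP Ha].
- apply/allP => c hc; apply/negPn/negP => hcI.
  have [h1 h2 h3] := HC c hc.
  by move: (Hf c); rewrite hcI h1 h3 /= (negbTE h2).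
- apply/forallP => y; apply/implyP => /andP[/andP[hyP hyI] hyx].
  apply/negPn/negP => hne.
  have [c hc hyc] := Hy y hyP hyx hne.
  have hcI := Ha c hc.
  by move: hyI; rewrite (hI.2 c y hcI hyP hyc).
Qed.

Lemma ind_E (x : pt n) I : ind R x I = (x \in I)%:R.
Proof. by []. Qed.

Lemma pt_neq (x y : pt n) : x != y -> (x.1 : nat) <> y.1 \/ (x.2 : nat) <> y.2.
Proof.
case: x y => [x1 x2] [y1 y2]; rewrite xpair_eqE negb_and => /orP[] /eqP H;
  [left | right] => E; apply: H; exact: val_inj.
Qed.

Lemma ext_out1 F a b : (n <= a)%N -> ext F a b = 0.
Proof. by move=> h; apply: ext_out; rewrite h. Qed.
Lemma ext_out2 F a b : (n <= b)%N -> ext F a b = 0.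
Proof. by move=> h; apply: ext_out; rewrite h orbT. Qed.

Ltac neqtac := apply/eqP => /(congr1 (fun z : pt _ => ((z.1 : nat), (z.2 : nat)))) /= [];
  lia.

Lemma square (I : {set pt n}) (hI : is_ideal I) (a b : nat) : (n.-1 <= a + b)%N ->
  ext (fun x => ind R x I) a.+1 b.+1 + ext (fun x => ind R x I) a b
  - ext (fun x => ind R x I) a b.+1 - ext (fun x => ind R x I) a.+1 b
  = ext (fun x => Tminus R x I) a b - ext (fun x => Tplus R x I) a.+1 b.+1.
Proof.
move=> hab.
case: (ltnP a n) => ha; last first.
  rewrite !ext_out1 //; [lra | lia | lia | lia].
case: (ltnP b n) => hb; last first.
  rewrite !ext_out2 //; [lra | lia | lia | lia].
pose x0 : pt n := (Ordinal ha, Ordinal hb).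
have hx0 : inP x0 by [].
rewrite !(ext_pt _ x0 a b) //.
case: (ltnP a.+1 n) => ha1; case: (ltnP b.+1 n) => hb1.
- pose x1 : pt n := (Ordinal ha1, Ordinal hb1).
  pose p : pt n := (Ordinal ha, Ordinal hb1).
  pose q : pt n := (Ordinal ha1, Ordinal hb).
  rewrite !(ext_pt _ x1 a.+1 b.+1) // !(ext_pt _ p a b.+1) // !(ext_pt _ q a.+1 b) //.
  have hp : inP p by rewrite /inP /=; lia.
  have hq : inP q by rewrite /inP /=; lia.
  have hx1 : inP x1 by rewrite /inP /=; lia.
  rewrite (Tminus_gen _ hI x0 [:: p; q]); last first.
  + move=> [y1 y2]; rewrite /ple /= => /andP[h1 h2] hne.
    have := pt_neq _ _ hne => /= hne'.
    case: (ltnP a y1) => h.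
    * exists q; first by rewrite !inE eqxx orbT.
      by rewrite /ple /=; lia.
    * exists p; first by rewrite !inE eqxx.
      by rewrite /ple /=; lia.
  + move=> c; rewrite !inE => /orP[] /eqP ->; split; rewrite /ple /=; try lia; neqtac.
  rewrite (Tplus_gen _ hI x1 [:: p; q]) //; last first.
  + move=> [y1 y2] _; rewrite /ple /= => /andP[h1 h2] hne.
    have := pt_neq _ _ hne => /= hne'.
    case: (ltnP a y1) => h.
    * exists q; first by rewrite !inE eqxx orbT.
      by rewrite /ple /=; lia.
    * exists p; first by rewrite !inE eqxx.
      by rewrite /ple /=; lia.
  + move=> c; rewrite !inE => /orP[] /eqP ->; split => //; rewrite /ple /=; try lia; neqtac.
  have H1 : x1 \in I -> p \in I by move=> h; apply: hI.2 h hp _; rewrite /ple /=; lia.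
  have H2 : x1 \in I -> q \in I by move=> h; apply: hI.2 h hq _; rewrite /ple /=; lia.
  have H3 : p \in I -> x0 \in I by move=> h; apply: hI.2 h hx0 _; rewrite /ple /=; lia.
  have H4 : q \in I -> x0 \in I by move=> h; apply: hI.2 h hx0 _; rewrite /ple /=; lia.
  rewrite /ind /=.
  move: H1 H2 H3 H4.
  case: (x1 \in I); case: (x0 \in I); case: (p \in I); case: (q \in I) => //= *; lra.
- pose q : pt n := (Ordinal ha1, Ordinal hb).
  rewrite !(ext_out2 _ a.+1 b.+1 hb1) !(ext_out2 _ a b.+1 hb1) !(ext_pt _ q a.+1 b) //.
  have hq : inP q by rewrite /inP /=; lia.
  rewrite (Tminus_gen _ hI x0 [:: q]); last first.
  + move=> [y1 y2]; rewrite /ple /= => /andP[h1 h2] hne.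
    have := pt_neq _ _ hne => /= hne'.
    have := ltn_ord y2 => /= hy2.
    exists q; first by rewrite !inE eqxx.
    by rewrite /ple /=; lia.
  + move=> c; rewrite !inE => /eqP ->; split; rewrite /ple /=; try lia; neqtac.
  have H4 : q \in I -> x0 \in I by move=> h; apply: hI.2 h hx0 _; rewrite /ple /=; lia.
  rewrite /ind /=.
  move: H4.
  case: (x0 \in I); case: (q \in I) => //= *; lra.
- pose p : pt n := (Ordinal ha, Ordinal hb1).
  rewrite !(ext_out1 _ a.+1 b.+1 ha1) !(ext_out1 _ a.+1 b ha1) !(ext_pt _ p a b.+1) //.
  have hp : inP p by rewrite /inP /=; lia.
  rewrite (Tminus_gen _ hI x0 [:: p]); last first.
  + move=> [y1 y2]; rewrite /ple /= => /andP[h1 h2] hne.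
    have := pt_neq _ _ hne => /= hne'.
    have := ltn_ord y1 => /= hy1.
    exists p; first by rewrite !inE eqxx.
    by rewrite /ple /=; lia.
  + move=> c; rewrite !inE => /eqP ->; split; rewrite /ple /=; try lia; neqtac.
  have H3 : p \in I -> x0 \in I by move=> h; apply: hI.2 h hx0 _; rewrite /ple /=; lia.
  rewrite /ind /=.
  move: H3.
  case: (x0 \in I); case: (p \in I) => //= *; lra.
- rewrite !(ext_out1 _ a.+1 b.+1 ha1) !(ext_out1 _ a.+1 b ha1) !(ext_out2 _ a b.+1 hb1).
  rewrite (Tminus_gen _ hI x0 [::]); last first.
  + move=> [y1 y2]; rewrite /ple /= => /andP[h1 h2] hne.
    have := pt_neq _ _ hne => /= hne'.
    have := ltn_ord y1 => /= hy1.
    have := ltn_ord y2 => /= hy2.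
    exfalso; lia.
  + by [].
  rewrite /ind /=.
  case: (x0 \in I) => /=; lra.
Qed.

Lemma shift_sum (G : nat -> R) k :
  \sum_(i < k) G i.+1 = \sum_(i < k) G i + G k - G 0%N.
Proof.
have h1 : \sum_(0 <= i < k.+1) G i = G 0%N + \sum_(0 <= i < k) G i.+1.
  exact: big_nat_recl.
have h2 : \sum_(0 <= i < k.+1) G i = \sum_(0 <= i < k) G i + G k.
  exact: big_nat_recr.
rewrite !big_mkord in h1 h2.
rewrite h2 in h1; lra.
Qed.

Lemma ext_sub F G a b : ext (fun x => F x - G x) a b = ext F a b - ext G a b.
Proof. by rewrite /ext -sumrB; apply: eq_bigr => x _; rewrite mulrBr. Qed.

Lemma Tplus_min (I : {set pt n}) (hI : is_ideal I) (a b : nat) :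
  (a < n)%N -> (b < n)%N -> (a + b)%N = n.-1 ->
  ext (fun x => Tplus R x I) a b = 1 - ext (fun x => ind R x I) a b.
Proof.
move=> ha hb hab.
pose x0 : pt n := (Ordinal ha, Ordinal hb).
rewrite !(ext_pt _ x0 a b) //.
rewrite (Tplus_gen _ hI x0 [::]) //=; last first.
- move=> [y1 y2]; rewrite /inP /ple /= => hy /andP[h1 h2] hne.
  have := pt_neq _ _ hne => /= hne'; exfalso; lia.
- by rewrite /inP /= hab.
rewrite /ind andbT; case: (x0 \in I) => /=; lra.
Qed.

End Aux.
Arguments ext {R n}.
Arguments shift_sum {R}.

Theorem theorem3p28 (R : realType) (n : nat) (k : int) :
  (1 <= n)%N ->
  (exists m : nat, (m < n)%N /\ k = (n.-1)%:Z - (2 * m)%:Z) ->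
  toggle_equiv
    (fun I : {set pt n} =>
       2 * diag_sum R k I - diag_sum R (k - 1) I - diag_sum R (k + 1) I)
    (fun _ => 1).
Proof.
move=> hn [m [hm hk]].
exists (fun x : pt n => if ((x.2 : int) - (x.1 : int) == k) then -1 else 0).
move=> I hI.
have [j0 hj0] : exists j0, j0 = (n.-1 - m)%N by eexists.
have -> : \sum_(x : pt n | inP x)
            (if ((x.2 : int) - (x.1 : int) == k) then -1 else 0) * Tog R x I =
          - \sum_(x : pt n | inP x && ((x.2 : int) - (x.1 : int) == k)) Tog R x I.
  rewrite big_mkcondr /= -sumrN; apply: eq_bigr => x _.
  by case: ifP => _; rewrite ?mulN1r ?mul0r ?oppr0.
rewrite /diag_sum.
rewrite (@diag_reindex R n (fun x => Tog R x I) k m j0); last first.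
  move=> i j hi hj; apply/idP/idP => /andP[h1 /eqP h2]; apply/andP; split;
    try apply/eqP; lia.
rewrite (@diag_reindex R n (fun x => ind R x I) k m j0); last first.
  move=> i j hi hj; apply/idP/idP => /andP[h1 /eqP h2]; apply/andP; split;
    try apply/eqP; lia.
rewrite (@diag_reindex R n (fun x => ind R x I) (k + 1) m j0.+1); last first.
  move=> i j hi hj; apply/idP/idP => /andP[h1 /eqP h2]; apply/andP; split;
    try apply/eqP; lia.
rewrite (@diag_reindex R n (fun x => ind R x I) (k - 1) m.+1 j0); last first.
  move=> i j hi hj; apply/idP/idP => /andP[h1 /eqP h2]; apply/andP; split;
    try apply/eqP; lia.
have S1 : \sum_(t < n) ext (fun x => ind R x I) (m + t).+1 (j0 + t).+1 =
          \sum_(t < n) ext (fun x => ind R x I) (m + t) (j0 + t)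
          + ext (fun x => ind R x I) (m + n) (j0 + n)
          - ext (fun x => ind R x I) (m + 0) (j0 + 0).
  rewrite -(shift_sum (fun t => ext (fun x => ind R x I) (m + t) (j0 + t))).
  by apply: eq_bigr => t _; rewrite !addnS.
have S2 : \sum_(t < n) ext (fun x => Tplus R x I) (m + t).+1 (j0 + t).+1 =
          \sum_(t < n) ext (fun x => Tplus R x I) (m + t) (j0 + t)
          + ext (fun x => Tplus R x I) (m + n) (j0 + n)
          - ext (fun x => Tplus R x I) (m + 0) (j0 + 0).
  rewrite -(shift_sum (fun t => ext (fun x => Tplus R x I) (m + t) (j0 + t))).
  by apply: eq_bigr => t _; rewrite !addnS.
have Z1 : ext (fun x => ind R x I) (m + n) (j0 + n) = 0 by apply: ext_out1; lia.
have Z2 : ext (fun x => Tplus R x I) (m + n) (j0 + n) = 0 by apply: ext_out1; lia.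
have T0 : ext (fun x => Tplus R x I) (m + 0) (j0 + 0)
          = 1 - ext (fun x => ind R x I) (m + 0) (j0 + 0).
  apply: Tplus_min => //; lia.
have Sq : \sum_(t < n) (ext (fun x => ind R x I) (m + t).+1 (j0 + t).+1
            + ext (fun x => ind R x I) (m + t) (j0 + t)
            - ext (fun x => ind R x I) (m + t) (j0 + t).+1
            - ext (fun x => ind R x I) (m + t).+1 (j0 + t))
          = \sum_(t < n) (ext (fun x => Tminus R x I) (m + t) (j0 + t)
            - ext (fun x => Tplus R x I) (m + t).+1 (j0 + t).+1).
  apply: eq_bigr => t _; apply: square => //; lia.
rewrite !sumrB big_split /= in Sq.
have P1 : \sum_(t < n) ext (fun x => ind R x I) (m + t) (j0.+1 + t)
        = \sum_(t < n) ext (fun x => ind R x I) (m + t) (j0 + t).+1.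
  by apply: eq_bigr => t _; rewrite addSn.
have Q1 : \sum_(t < n) ext (fun x => ind R x I) (m.+1 + t) (j0 + t)
        = \sum_(t < n) ext (fun x => ind R x I) (m + t).+1 (j0 + t).
  by apply: eq_bigr => t _; rewrite addSn.
have TG : \sum_(t < n) ext (fun x => Tog R x I) (m + t) (j0 + t)
        = \sum_(t < n) ext (fun x => Tplus R x I) (m + t) (j0 + t)
          - \sum_(t < n) ext (fun x => Tminus R x I) (m + t) (j0 + t).
  by rewrite -sumrB; apply: eq_bigr => t _; rewrite /Tog ext_sub.
rewrite P1 Q1 TG.
lra.
Qed.
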